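(* Let $M,N,d_f,d_t$ be positive integers with $d_f\mid M$ and $d_t\mid N$, with $N/(2d_t)$ an integer, and let $T>0$, $\Delta f>0$. Consider a doubly selective channel with $P$ paths having complex gains $h_1,\dots,h_P$, delays $\tau_1,\dots,\tau_P\ge 0$ and Dopplers $\nu_1,\dots,\nu_P\in\mathbb{R}$, and set $l_i=M\Delta f\,\tau_i$, $k_i=NT\,\nu_i$. Define, for all integers $k,l$, the original CSF $$h_{\rm DD}[k,l]=\sum_{i=1}^P h_i\sum_{m=0}^{M-1}\frac{1}{\sqrt M}e^{-j2\pi m\frac{l_i-l}{M}}\sum_{n=0}^{N-1}\frac{1}{\sqrt N}e^{j2\pi n\frac{k_i-k}{N}},$$ and the periodic CSF obtained from pilots on the lattice $m\in\{0,d_f,2d_f,\dots\}$, $n\in\{0,d_t,2d_t,\dots\}$, $$h^{\rm Periodic}_{\rm DD}[k,l]=\sum_{i=1}^P h_i\sum_{m'=0}^{M/d_f-1}\frac{1}{\sqrt{\tilde M}}e^{-j2\pi m' d_f\frac{l_i-l}{M}}\sum_{n'=0}^{N/d_t-1}\frac{1}{\sqrt{\tilde N}}e^{j2\pi n' d_t\frac{k_i-k}{N}},$$ with $\tilde M=M/d_f^2$ and $\tilde N=N/d_t^2$. Suppose (i) every delay and Doppler is on-grid, i.e. $l_i\in\mathbb{Z}$ and $k_i\in\mathbb{Z}$ (resolutions $\frac{1}{M\Delta f}$ and $\frac{1}{NT}$), and (ii) $\nu_i\in\left[-\frac{1}{2d_tT},\frac{1}{2d_tT}-\frac{1}{NT}\right]$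 and $\tau_i\in\left[0,\frac{1}{d_f\Delta f}-\frac{1}{M\Delta f}\right]$ for all $i$. Then for all $k\in\{-\frac{N}{2d_t},-\frac{N}{2d_t}+1,\dots,\frac{N}{2d_t}-1\}$ and all $l\in\{0,1,\dots,\frac{M}{d_f}-1\}$, $h^{\rm Periodic}_{\rm DD}[k,l]=h_{\rm DD}[k,l]$, i.e. one period of the periodic CSF exactly represents the original CSF.
   Context: Setting: OFDM with $N$ symbols of duration $T$ and $M$ subcarriers of spacing $\Delta f$; the sampled channel transfer function is $h_{\rm TF}[m,n]=\sum_{i=1}^P h_i e^{j2\pi\nu_i nT}e^{-j2\pi\tau_i m\Delta f}$, and the CSF $h_{\rm DD}$ is its DFT along time ($n$) and inverse DFT along frequency ($m$), as written explicitly in the claim. The periodic CSF is the same transform applied to the CTF sampled only at pilot positions $m\in\{0,d_f,\dots,M-d_f\}$, $n\in\{0,d_t,\dots,N-d_t\}$ (zero elsewhere), with scaling factors $\tilde M,\tilde N$ as given; it is periodic with periods $N/d_t$ in $k$ and $M/d_f$ in $l$. Here $j=\sqrt{-1}$. *)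

(* Defs.v *)
From Stdlib Require Import Reals Lra Lia ZArith Arith.
From Coquelicot Require Export Coquelicot.
Open Scope R_scope.

Definition cis (theta : R) : C := (cos theta, sin theta).

Fixpoint csum (n : nat) (f : nat -> C) : C :=
  match n with
  | O => RtoC 0
  | S n' => Cplus (csum n' f) (f n')
  end.

Definition lidx (M : nat) (Df : R) (tau : R) : R := INR M * Df * tau.
Definition kidx (N : nat) (T : R) (nu : R) : R := INR N * T * nu.

Definition hDD (M N P : nat) (T Df : R) (h : nat -> C) (tau nu : nat -> R)
  (k l : Z) : C :=
  csum P (fun i =>
    Cmult (h i)
     (Cmult
       (csum M (fun m =>
          Cmult (RtoC (/ sqrt (INR M)))
            (cis (- (2 * PI * INR m * (lidx M Df (tau i) - IZR l) / INR M)))))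
       (csum N (fun n =>
          Cmult (RtoC (/ sqrt (INR N)))
            (cis (2 * PI * INR n * (kidx N T (nu i) - IZR k) / INR N)))))).

Definition hDD_periodic (M N df dt P : nat) (T Df : R) (h : nat -> C)
  (tau nu : nat -> R) (k l : Z) : C :=
  csum P (fun i =>
    Cmult (h i)
     (Cmult
       (csum (M / df) (fun m' =>
          Cmult (RtoC (/ sqrt (INR M / (INR df ^ 2))))
            (cis (- (2 * PI * INR m' * INR df * (lidx M Df (tau i) - IZR l) / INR M)))))
       (csum (N / dt) (fun n' =>
          Cmult (RtoC (/ sqrt (INR N / (INR dt ^ 2))))
            (cis (2 * PI * INR n' * INR dt * (kidx N T (nu i) - IZR k) / INR N)))))).

(* Main.v *)
Require Import Defs.
From Stdlib Require Import Reals ZArith Arith Lra Lia.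
From Coquelicot Require Import Coquelicot.
Open Scope R_scope.

Lemma csum_ext n f g : (forall m, (m < n)%nat -> f m = g m) -> csum n f = csum n g.
Proof.
  induction n; simpl; intros H; auto.
  rewrite IHn by (intros; apply H; lia). rewrite H by lia. reflexivity.
Qed.

Lemma csum_scal n c f : csum n (fun m => Cmult c (f m)) = Cmult c (csum n f).
Proof. induction n; simpl. apply injective_projections; simpl; ring. rewrite IHn. ring. Qed.

Lemma csum_const n c : csum n (fun _ => c) = Cmult (RtoC (INR n)) c.
Proof.
  induction n; simpl csum. apply injective_projections; simpl; ring.
  rewrite IHn. rewrite S_INR. apply injective_projections; simpl; ring.
Qed.

Lemma cis_add a b : Cmult (cis a) (cis b) = cis (a + b).
Proof. unfold cis, Cmult; simpl. rewrite cos_plus, sin_plus. f_equal; ring. Qed.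

Lemma cis_2kPI (k : Z) : cis (2 * PI * IZR k) = RtoC 1.
Proof.
  assert (Hn : forall n : nat, cis (2 * PI * INR n) = RtoC 1).
  { intro n. unfold cis, RtoC. pose proof (cos_period 0 n). pose proof (sin_period 0 n).
    rewrite cos_0 in H. rewrite sin_0 in H0. f_equal.
    rewrite <- H. f_equal; ring. rewrite <- H0. f_equal; ring. }
  destruct (Z_le_gt_dec 0 k).
  - rewrite <- (Z2Nat.id k) by lia. rewrite <- INR_IZR_INZ. apply Hn.
  - replace (2 * PI * IZR k) with (- (2 * PI * INR (Z.to_nat (- k)))).
    + pose proof (Hn (Z.to_nat (-k))). unfold cis in *. rewrite cos_neg, sin_neg.
      injection H as H1 H2. rewrite H1, H2. unfold RtoC. f_equal; ring.
    + rewrite INR_IZR_INZ, Z2Nat.id by lia. rewrite opp_IZR. ring.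
Qed.

Lemma geom_tel n th :
  Cmult (csum n (fun m => cis (INR m * th))) (Cminus (cis th) (RtoC 1))
  = Cminus (cis (INR n * th)) (RtoC 1).
Proof.
  induction n.
  - simpl. replace (0 * th) with 0 by ring. unfold cis. rewrite cos_0, sin_0.
    apply injective_projections; simpl; ring.
  - simpl csum. 
    transitivity (Cplus (Cmult (csum n (fun m => cis (INR m * th))) (Cminus (cis th) (RtoC 1)))
                  (Cminus (Cmult (cis (INR n * th)) (cis th)) (cis (INR n * th)))).
    { ring. }
    rewrite IHn, cis_add. rewrite S_INR. replace ((INR n + 1) * th) with (INR n * th + th) by ring.
    ring.
Qed.

Lemma cis_ne1 (r n : Z) : (0 < r < n)%Z -> cis (2 * PI * IZR r / IZR n) <> RtoC 1.
Proof.
  intros Hr Heq. unfold cis, RtoC in Heq. injection Heq as Hc _.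
  assert (Hrn : 0 < IZR r / IZR n < 1).
  { assert (0 < IZR r) by (apply IZR_lt; lia). assert (IZR r < IZR n) by (apply IZR_lt; lia).
    assert (E: IZR r / IZR n * IZR n = IZR r) by (field; lra). split. apply Rdiv_lt_0_compat; lra. nra. }
  set (a := PI * (IZR r / IZR n)).
  replace (2 * PI * IZR r / IZR n) with (2 * a) in Hc by (unfold a, Rdiv; ring).
  rewrite cos_2a_sin in Hc.
  assert (0 < sin a). { apply sin_gt_0; unfold a; pose proof PI_RGT_0; nra. }
  nra.
Qed.

Lemma geom_sum (n : nat) (a : Z) : (0 < n)%nat ->
  csum n (fun m => cis (2 * PI * INR m * IZR a / INR n)) =
  if Z.eqb (a mod Z.of_nat n) 0 then RtoC (INR n) else RtoC 0.
Proof.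
  intros Hn. assert (HnR : INR n <> 0) by (apply not_0_INR; lia).
  pose proof (Z.div_mod a (Z.of_nat n) ltac:(lia)) as Hd.
  pose proof (Z.mod_pos_bound a (Z.of_nat n) ltac:(lia)) as Hb.
  set (q := (a / Z.of_nat n)%Z) in *. set (r := (a mod Z.of_nat n)%Z) in *.
  assert (Hth : forall m : nat, 2 * PI * INR m * IZR a / INR n =
     2 * PI * IZR (Z.of_nat m * q) + INR m * (2 * PI * IZR r / IZR (Z.of_nat n))).
  { intro m. rewrite Hd, mult_IZR, plus_IZR, mult_IZR, <- !INR_IZR_INZ. field. auto. }
  assert (Hterm : forall m : nat, cis (2 * PI * INR m * IZR a / INR n) =
     cis (INR m * (2 * PI * IZR r / IZR (Z.of_nat n)))).
  { intro m. rewrite Hth, <- cis_add, cis_2kPI. ring. }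
  rewrite (csum_ext _ _ _ (fun m _ => Hterm m)).
  destruct (Z.eqb_spec r 0) as [Hr|Hr].
  - rewrite Hr. replace (csum n _) with (csum n (fun _ => RtoC 1)).
    + rewrite csum_const. ring.
    + apply csum_ext; intros. replace (INR m * (2 * PI * IZR 0 / IZR (Z.of_nat n))) with (2 * PI * IZR 0).
      now rewrite cis_2kPI. unfold Rdiv; ring.
  - set (th := 2 * PI * IZR r / IZR (Z.of_nat n)).
    pose proof (geom_tel n th) as G.
    replace (INR n * th) with (2 * PI * IZR r) in G.
    2:{ unfold th. rewrite <- INR_IZR_INZ. field. auto. }
    rewrite cis_2kPI in G.
    assert (Hne : Cminus (cis th) (RtoC 1) <> RtoC 0).
    { intro E. apply (cis_ne1 r (Z.of_nat n)). lia.
      fold th. replace (cis th) with (Cplus (Cminus (cis th) (RtoC 1)) (RtoC 1)) by ring.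
      rewrite E. ring. }
    set (S := csum n _) in *.
    replace (Cminus (RtoC 1) (RtoC 1)) with (RtoC 0) in G by ring.
    replace S with (Cmult (Cmult S (Cminus (cis th) (RtoC 1))) (Cinv (Cminus (cis th) (RtoC 1)))).
    rewrite G. ring. field. auto.
Qed.

Lemma core Kd d a : (0 < Kd)%nat -> (0 < d)%nat -> (- Z.of_nat Kd < a < Z.of_nat Kd)%Z ->
  csum (Kd * d / d) (fun m => Cmult (RtoC (/ sqrt (INR (Kd * d) / INR d ^ 2)))
      (cis (2 * PI * INR m * INR d * IZR a / INR (Kd * d)))) =
  csum (Kd * d) (fun m => Cmult (RtoC (/ sqrt (INR (Kd * d))))
      (cis (2 * PI * INR m * IZR a / INR (Kd * d)))).
Proof.
  intros HK Hd Ha.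
  rewrite Nat.div_mul by lia. rewrite !csum_scal.
  assert (HdR : 0 < INR d) by (apply lt_0_INR; lia).
  assert (HKR : 0 < INR Kd) by (apply lt_0_INR; lia).
  rewrite (csum_ext Kd _ (fun m => cis (2 * PI * INR m * IZR a / INR Kd))).
  2:{ intros m _. f_equal. rewrite mult_INR. field. lra. }
  rewrite !geom_sum by lia.
  rewrite sqrt_div_alt by (apply pow_lt; lra). rewrite sqrt_pow2 by lra.
  assert (HsK : 0 < sqrt (INR (Kd * d))) by (apply sqrt_lt_R0; rewrite mult_INR; nra).
  destruct (Z.eq_dec a 0) as [->|Hne].
  - rewrite !Z.mod_0_l by lia. simpl Z.eqb.
    apply injective_projections; simpl; [|ring].
    rewrite mult_INR in *.
    assert (E : sqrt (INR Kd * INR d) * sqrt (INR Kd * INR d) = INR Kd * INR d)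
      by (apply sqrt_sqrt; nra).
    field_simplify; [|lra|lra]. nra.
  - replace (a mod Z.of_nat Kd =? 0)%Z with false.
    replace (a mod Z.of_nat (Kd * d) =? 0)%Z with false.
    apply injective_projections; simpl; ring.
    + symmetry. apply Z.eqb_neq. intro E. apply Z.mod_divide in E; [|lia].
      destruct E as [x Hx]. rewrite Nat2Z.inj_mul in Hx. assert (1 <= Z.of_nat d)%Z by lia. assert (Z.of_nat Kd * Z.of_nat d >= Z.of_nat Kd)%Z by nia. destruct (Z.lt_trichotomy x 0) as [Hx0|[Hx0|Hx0]]; [assert (x * (Z.of_nat Kd * Z.of_nat d) <= - (Z.of_nat Kd * Z.of_nat d))%Z by nia | | assert (x * (Z.of_nat Kd * Z.of_nat d) >= (Z.of_nat Kd * Z.of_nat d))%Z by nia]; lia.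
    + symmetry. apply Z.eqb_neq. intro E. apply Z.mod_divide in E; [|lia].
      destruct E as [x Hx]. destruct (Z.lt_trichotomy x 0) as [Hx0|[Hx0|Hx0]]; [assert (x * Z.of_nat Kd <= - Z.of_nat Kd)%Z by nia | | assert (x * Z.of_nat Kd >= Z.of_nat Kd)%Z by nia]; lia.
Qed.

Lemma core_neg Kd d z l : (0 < Kd)%nat -> (0 < d)%nat -> (- Z.of_nat Kd < l - z < Z.of_nat Kd)%Z ->
  csum (Kd * d / d) (fun m => Cmult (RtoC (/ sqrt (INR (Kd * d) / INR d ^ 2)))
      (cis (- (2 * PI * INR m * INR d * (IZR z - IZR l) / INR (Kd * d))))) =
  csum (Kd * d) (fun m => Cmult (RtoC (/ sqrt (INR (Kd * d))))
      (cis (- (2 * PI * INR m * (IZR z - IZR l) / INR (Kd * d))))).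
Proof.
  intros HK Hd Ha.
  assert (HKd : 0 < INR (Kd * d)) by (apply lt_0_INR; lia).
  rewrite (csum_ext (Kd * d / d) _ (fun m => Cmult (RtoC (/ sqrt (INR (Kd * d) / INR d ^ 2)))
      (cis (2 * PI * INR m * INR d * IZR (l - z) / INR (Kd * d))))).
  rewrite (csum_ext (Kd * d) _ (fun m => Cmult (RtoC (/ sqrt (INR (Kd * d))))
      (cis (2 * PI * INR m * IZR (l - z) / INR (Kd * d))))).
  apply core; auto.
  all: intros m _; rewrite minus_IZR; f_equal; f_equal; field; lra.
Qed.

Theorem theorem1 (M N df dt P : nat) (T Df : R) (h : nat -> C) (tau nu : nat -> R) :
  (0 < M)%nat -> (0 < N)%nat -> (0 < df)%nat -> (0 < dt)%nat ->
  Nat.divide df M -> Nat.divide dt N -> Nat.divide (2 * dt) N ->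
  0 < T -> 0 < Df ->
  (forall i, (i < P)%nat -> 0 <= tau i) ->
  (* (i) on-grid delays and Dopplers *)
  (forall i, (i < P)%nat -> exists z : Z, lidx M Df (tau i) = IZR z) ->
  (forall i, (i < P)%nat -> exists z : Z, kidx N T (nu i) = IZR z) ->
  (* (ii) range conditions *)
  (forall i, (i < P)%nat ->
     - (1 / (2 * INR dt * T)) <= nu i <= 1 / (2 * INR dt * T) - 1 / (INR N * T)) ->
  (forall i, (i < P)%nat ->
     0 <= tau i <= 1 / (INR df * Df) - 1 / (INR M * Df)) ->
  forall (k l : Z),
    (- Z.of_nat (N / (2 * dt)) <= k < Z.of_nat (N / (2 * dt)))%Z ->
    (0 <= l < Z.of_nat (M / df))%Z ->
    hDD_periodic M N df dt P T Df h tau nu k l = hDD M N P T Df h tau nu k l.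
Proof.
  intros HM HN Hdf Hdt [Md HMd] _ [Q HQ] HT HDf _ Hl Hk Hnu Htau k l Hkr Hlr.
  replace (Q * (2 * dt))%nat with (2 * Q * dt)%nat in HQ by lia.
  subst M N.
  assert (EQ : (2 * Q * dt / (2 * dt) = Q)%nat).
  { replace (2 * Q * dt)%nat with (Q * (2 * dt))%nat by lia. apply Nat.div_mul; lia. }
  rewrite EQ in Hkr. rewrite Nat.div_mul in Hlr by lia.
  assert (HMd0 : (0 < Md)%nat) by lia.
  assert (HQ0 : (0 < Q)%nat) by lia.
  assert (HdfR : 0 < INR df) by (apply lt_0_INR; lia).
  assert (HdtR : 0 < INR dt) by (apply lt_0_INR; lia).
  assert (HMdR : 0 < INR Md) by (apply lt_0_INR; lia).
  assert (HQR : 0 < INR Q) by (apply lt_0_INR; lia).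
  unfold hDD_periodic, hDD. apply csum_ext. intros i Hi.
  destruct (Hl i Hi) as [zl Hzl]. destruct (Hk i Hi) as [zk Hzk].
  rewrite Hzl, Hzk.
  assert (Hzlr : (0 <= zl <= Z.of_nat Md - 1)%Z).
  { destruct (Htau i Hi) as [H1 H2]. unfold lidx in Hzl. rewrite mult_INR in *.
    assert (A : 0 <= IZR zl).
    { rewrite <- Hzl. apply Rmult_le_pos; [|lra]. apply Rmult_le_pos; nra. }
    assert (B : IZR zl <= INR Md - 1).
    { rewrite <- Hzl.
      replace (INR Md - 1) with (INR Md * INR df * Df * (1 / (INR df * Df) - 1 / (INR Md * INR df * Df)))
        by (field; repeat split; lra).
      apply Rmult_le_compat_l; [|lra]. apply Rmult_le_pos; [|lra]; nra. }
    rewrite INR_IZR_INZ in B. apply le_IZR in A.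
    assert (IZR zl < IZR (Z.of_nat Md)) by lra. apply lt_IZR in H. lia. }
  assert (Hzkr : (- Z.of_nat Q <= zk <= Z.of_nat Q - 1)%Z).
  { destruct (Hnu i Hi) as [H1 H2]. unfold kidx in Hzk. rewrite !mult_INR in *.
    assert (A : - INR Q <= IZR zk).
    { rewrite <- Hzk.
      replace (- INR Q) with (INR 2 * INR Q * INR dt * T * (- (1 / (2 * INR dt * T))))
        by (simpl; field; lra).
      apply Rmult_le_compat_l; [|lra]. simpl. apply Rmult_le_pos; [|lra]; nra. }
    assert (B : IZR zk <= INR Q - 1).
    { rewrite <- Hzk.
      replace (INR Q - 1) with (INR 2 * INR Q * INR dt * T * (1 / (2 * INR dt * T) - 1 / (INR 2 * INR Q * INR dt * T)))
        by (simpl; field; repeat split; lra).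
      apply Rmult_le_compat_l; [|lra]. simpl. apply Rmult_le_pos; [|lra]; nra. }
    rewrite INR_IZR_INZ in A, B. rewrite <- opp_IZR in A. apply le_IZR in A.
    assert (IZR zk < IZR (Z.of_nat Q)) by lra. apply lt_IZR in H. lia. }
  f_equal. f_equal.
  - apply core_neg; lia.
  - rewrite <- minus_IZR. apply core; lia.
Qed.
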